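(* In the standing setting, let $k\in\mathbb{N}$, let $X',T\subseteq X$ and let $c$ be a colour such that $X'$ is $(2k,T,c)$-free. Let $\sigma=(e_0,m_1,e_1,\dots,e_{\ell-1},m_\ell)$ be an $X'$-switching from $c$ to $(m_\ell)_C$ of length $\ell\leq k$. Let $A$ be a set of at most $k$ edges of $M\setminus\{(c)_M\}$ and let $B\subseteq X'$ with $|B|\leq k$. Suppose $(\sigma)_X\cap T=\emptyset$, $(\sigma)_X\cap(A)_X=\emptyset$, $(\sigma)_X\cap B=\emptyset$, $T\cap(A)_X=\emptyset$ and $(A)_X\cap B=\emptyset$. Then there is a rainbow matching $\tilde M$ of size $n$ in $G$ which contains no edge of colour $(m_\ell)_C$, contains every edge of $A$, and covers no vertex of $(m(\sigma))_X\cup B$.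
   Context: Standing setting: $G$ is a bipartite graph with bipartition classes $X,Y$ which is the union of $n+1$ pairwise edge-disjoint matchings; these matchings are the colours, and the colour of an edge is the matching containing it. A matching is rainbow if its edges have distinct colours. $M$ is a rainbow matching of size $n$ in $G$, and $c^*$ is the unique colour not used by $M$. Notation: for an edge $e$, $(e)_C$ is its colour, $(e)_X=e\cap X$, $(e)_Y=e\cap Y$. For $x\in X$ covered by $M$: $(x)_M$ is the edge of $M$ at $x$, $(x)_C$ its colour, $(x)_Y$ its endpoint in $Y$ (undefined if $x$ is not covered). Analogously $(y)_M,(y)_C,(y)_X$ for $y\in Y$. For a colour $c\neq c^*$: $(c)_M$ is the colour-$c$ edge of $M$, $(c)_X=(c)_M\cap X$, $(c)_Y=(c)_M\cap Y$ (undefined for $c^*$). For a set $S$ of such objects, $(S)_M,(S)_X,(S)_Y,(S)_C$ are the sets of the defined images of its elements. Free sets: for $X',T\subseteq X$, a real $k\ge 0$ and a colour $c$, $X'$ is $(k,T,c)$-free if $T\cap X'=\emptyset$, $c\notin(X'\cup T)_C$, and for every set $A$ of at most $k$ edges of $M\setminus((T)_M\cup\{(c)_M\})$ and every $B\subseteq X'$ with $|B|\le k$ and $(A)_X\cap B=\emptyset$, there is a rainbow matching $M'$ of size $n$ in $G$ containing every edge of $A$, covering no vertex of $B$, and containing no edge of colour $c$. Switchings: for $X'\subseteq X$, a sequence of edges $\sigma=(e_0,m_1,e_1,m_2,\dots,e_{\ell-1},m_\ell)$ with $\ell\ge1$ is an $X'$-switching if (i) each $m_i\in M$ and each $e_i\notin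 M$; (ii) for each $i$, $m_i$ and $e_i$ have the same colour $c_i$ (where $c_0$ is the colour of $e_0$ and $c_\ell$ that of $m_\ell$); (iii) for each $i$, $e_{i-1}\cap m_i=\{(m_i)_Y\}$; (iv) for all $i\neq j$: $e_i\cap e_j=\emptyset$, $e_{i-1}\cap m_j=\emptyset$, and $c_i\neq c_j$; (v) $(e_i)_X\in X'$ for each $i$. It is a switching from $c_0$ to $c_\ell$ of length $\ell$. Write $e(\sigma)=\{e_0,\dots,e_{\ell-1}\}$, $m(\sigma)=\{m_1,\dots,m_\ell\}$, $(\sigma)_X=(e(\sigma))_X\cup(m(\sigma))_X$. *)

(* Defs.v *)
From HB Require Import structures.
From mathcomp Require Import all_boot.
Set Implicit Arguments.
Unset Strict Implicit.
Unset Printing Implicit Defensive.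

(* Bipartite graph with classes X, Y: an edge is a pair (x, y) : X * Y.
   G has edge set E; the n+1 pairwise edge-disjoint matchings are the colour
   classes of col : X * Y -> C with #|C| = n+1, and the colouring is proper. *)
Section Rainbow.
Variables (X Y C : finType).
Implicit Types (f g : X * Y) (N E : {set X * Y}).

Definition vdisjoint f g := (f.1 != g.1) && (f.2 != g.2).

Definition is_matching N := {in N &, forall f g, f != g -> vdisjoint f g}.

Definition proper_colouring E (col : X * Y -> C) :=
  {in E &, forall f g, f != g -> col f = col g -> vdisjoint f g}.

Definition rainbow_matching E (col : X * Y -> C) N :=
  [/\ N \subset E, is_matching N & {in N &, injective col}].

Definition edgesX N : {set X} := [set f.1 | f in N].

Definition free (n : nat) E (col : X * Y -> C) (M : {set X * Y}) (k : nat)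
    (X' T : {set X}) (c : C) : Prop :=
  [/\ [disjoint T & X'],
      (forall f, f \in M -> f.1 \in X' :|: T -> col f != c) &
      forall (A : {set X * Y}) (B : {set X}),
        A \subset M ->
        (forall f, f \in A -> f.1 \notin T /\ col f != c) ->
        #|A| <= k -> B \subset X' -> #|B| <= k ->
        [disjoint edgesX A & B] ->
        exists M' : {set X * Y},
          [/\ rainbow_matching E col M', #|M'| = n, A \subset M',
              (forall f, f \in M' -> f.1 \notin B) &
              (forall f, f \in M' -> col f != c)]].

(* switching sigma = (e 0, m 1, e 1, ..., e (l-1), m l); colours c_i *)
Definition swcol (col : X * Y -> C) (l : nat) (e m : nat -> X * Y) (i : nat) :=
  if i < l then col (e i) else col (m l).

Definition switching E (col : X * Y -> C) (M : {set X * Y}) (X' : {set X})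
    (l : nat) (e m : nat -> X * Y) : Prop :=
  [/\ 0 < l,
      (forall i, i < l -> [/\ e i \in E, e i \notin M & (e i).1 \in X']),
      (forall i, 0 < i <= l -> m i \in M),
      (forall i, 0 < i < l -> col (m i) = col (e i)) &
      [/\
      (forall i, 0 < i <= l -> (e i.-1).2 = (m i).2 /\ (e i.-1).1 != (m i).1),
      (forall i j, i < l -> j < l -> i != j -> vdisjoint (e i) (e j)),
      (forall i j, 0 < i <= l -> 0 < j <= l -> i != j -> vdisjoint (e i.-1) (m j)) &
      (forall i j, i <= l -> j <= l -> i != j -> swcol col l e m i != swcol col l e m j)]].

Definition switch_mX (l : nat) (m : nat -> X * Y) : {set X} :=
  [set (m (val i).+1).1 | i : 'I_l].
Definition switch_eX (l : nat) (e : nat -> X * Y) : {set X} :=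
  [set (e (val i)).1 | i : 'I_l].
Definition switchX (l : nat) (e m : nat -> X * Y) : {set X} :=
  switch_eX l e :|: switch_mX l m.

End Rainbow.

(* Main.v *)
Require Import Defs.
From HB Require Import structures.
From mathcomp Require Import all_boot.

Theorem mainTheorem10 (X Y C : finType) (n : nat) (E : {set X * Y})
    (col : X * Y -> C) (M : {set X * Y}) (k : nat) (X' T : {set X}) (c : C)
    (l : nat) (e m : nat -> X * Y) (A : {set X * Y}) (B : {set X}) :
  #|C| = n.+1 ->
  proper_colouring E col ->
  rainbow_matching E col M -> #|M| = n ->
  free n E col M (2 * k) X' T c ->
  switching E col M X' l e m -> col (e 0) = c -> l <= k ->
  A \subset M -> (forall f, f \in A -> col f != c) -> #|A| <= k ->
  B \subset X' -> #|B| <= k ->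
  [disjoint switchX l e m & T] ->
  [disjoint switchX l e m & edgesX A] ->
  [disjoint switchX l e m & B] ->
  [disjoint T & edgesX A] ->
  [disjoint edgesX A & B] ->
  exists Mt : {set X * Y},
    [/\ rainbow_matching E col Mt, #|Mt| = n,
        (forall f, f \in Mt -> col f != col (m l)),
        A \subset Mt &
        (forall f, f \in Mt -> f.1 \notin switch_mX l m :|: B)].
Proof.
move=> _ _ _ _ [HTX' HcolX' Hfree] [Hl He Hm Hcol [H3 H4a H4b H4c]] He0 Hlk
  HAM HAc HAk HBX' HBk D1 D2 D3 D4 D5.
have dis : forall (T0 : finType) (P Q : {set T0}) x,
    [disjoint P & Q] -> x \in P -> x \in Q -> False.
  by move=> T0 P Q x H xP xQ; rewrite (disjointFr H xP) in xQ.
have F1 : forall i, 0 < i <= l -> col (m i) = swcol col l e m i.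
  move=> i /andP[i0 il]; rewrite /swcol; case: ltnP => h.
    by apply: Hcol; rewrite i0 h.
  by have -> : i = l by apply/eqP; rewrite eqn_leq il h.
have F2 : forall i, i < l -> swcol col l e m i = col (e i).
  by move=> i h; rewrite /swcol h.
have swX : forall j, j < l -> (e j).1 \in switchX l e m.
  move=> j jl; rewrite /switchX in_setU; apply/orP; left.
  by apply/imsetP; exists (Ordinal jl).
have smX : forall j, j < l -> (m j.+1).1 \in switchX l e m.
  move=> j jl; rewrite /switchX in_setU; apply/orP; right.
  by apply/imsetP; exists (Ordinal jl).
have mXP : forall x, x \in switch_mX l m -> exists2 j, j < l & x = (m j.+1).1.
  by move=> x /imsetP[j _ ->]; exists (val j); rewrite ?ltn_ord.
have emX : forall i j, i < l -> j < l -> (e i).1 != (m j.+1).1.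
  move=> i j il jl; case: (eqVneq i j) => [<-|ij].
    by case: (H3 i.+1 il).
  have := H4b i.+1 j.+1 il jl; rewrite eqSS => /(_ ij) /andP[].
  done.
pose ms := [set m (val i).+1 | i : 'I_l].
pose eS := [set e (val i) | i : 'I_l].
have msP : forall f, f \in ms -> exists2 j, j < l & f = m j.+1.
  by move=> f /imsetP[j _ ->]; exists (val j); rewrite ?ltn_ord.
have esP : forall f, f \in eS -> exists2 j, j < l & f = e j.
  by move=> f /imsetP[j _ ->]; exists (val j); rewrite ?ltn_ord.
have msM : ms \subset M.
  apply/subsetP => f /msP[j jl ->]; apply: Hm; by [].
pose A' := A :|: ms.
pose B' := B :|: switch_eX l e.
have minj : {in [set: 'I_l] &, injective (fun i : 'I_l => m (val i).+1)}.
  move=> i j _ _ /= eq; apply/eqP; apply/negPn/negP => ij.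
  have := H4c i.+1 j.+1 (ltn_ord i) (ltn_ord j); rewrite eqSS => /(_ ij).
  by rewrite -!F1 ?ltn_ord // eq eqxx.
have einj : {in [set: 'I_l] &, injective (fun i : 'I_l => e (val i))}.
  move=> i j _ _ /= eq; apply/eqP; apply/negPn/negP => ij.
  have /andP[] := H4a i j (ltn_ord i) (ltn_ord j) ij.
  by rewrite eq eqxx.
have cms : #|ms| = l by rewrite card_in_imset ?card_ord // => i j _ _; apply: minj; rewrite in_setT.
have ces : #|eS| = l by rewrite card_in_imset ?card_ord // => i j _ _; apply: einj; rewrite in_setT.
have ceX : #|switch_eX l e| <= l.
  by rewrite /switch_eX (leq_trans (leq_imset_card _ _)) // card_ord.
have [M' [[M'E M'm M'inj] M'n AM' M'B M'c]] : exists M' : {set X * Y},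
    [/\ rainbow_matching E col M', #|M'| = n, A' \subset M',
        (forall f, f \in M' -> f.1 \notin B') &
        (forall f, f \in M' -> col f != c)].
  apply: Hfree.
  - by rewrite subUset HAM msM.
  - move=> f; rewrite in_setU => /orP[fA|/msP[j jl ->]].
      split; last exact: HAc.
      apply/negP => fT; apply: (dis _ _ _ _ D4 fT).
      by apply/imsetP; exists f.
    split.
      by apply/negP => mT; apply: (dis _ _ _ _ D1 (smX j jl) mT).
    rewrite F1 ?ltn0Sn ?jl // -He0 -(F2 0) //.
    by apply: H4c.
  - rewrite (leq_trans (leq_card_setU _ _)) // cms mul2n -addnn.
    by apply: leq_add.
  - apply/subsetP => x; rewrite in_setU => /orP[/(subsetP HBX')//|/imsetP[j _ ->]].
    by have [_ _] := He j (ltn_ord j).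
  - rewrite (leq_trans (leq_card_setU _ _)) // mul2n -addnn.
    by apply: leq_add => //; apply: leq_trans ceX Hlk.
  - rewrite disjoint_subset; apply/subsetP => x /imsetP[f]; rewrite in_setU => /orP[fA|/msP[j jl ->]] -> .
      rewrite inE /= in_setU negb_or; apply/andP; split.
        by apply/negP => fB; apply: (dis _ _ _ _ D5 _ fB); apply/imsetP; exists f.
      apply/negP => /imsetP[i _ ei]; apply: (dis _ _ _ _ D2 (swX i (ltn_ord i))).
      by rewrite -ei; apply/imsetP; exists f.
    rewrite inE /= in_setU negb_or; apply/andP; split.
      by apply/negP => fB; apply: (dis _ _ _ _ D3 (smX j jl) fB).
    apply/negP => /imsetP[i _ ei]; move: (emX i j (ltn_ord i) jl).
    by rewrite -ei eqxx.
have msM' : ms \subset M'.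
  by apply: subset_trans AM'; rewrite /A' subsetUr.
have AM'' : A \subset M'.
  by apply: subset_trans AM'; rewrite /A' subsetUl.
have esB' : forall j, j < l -> (e j).1 \in B'.
  move=> j jl; rewrite in_setU; apply/orP; right.
  by apply/imsetP; exists (Ordinal jl).
have eM' : forall j, j < l -> e j \notin M'.
  by move=> j jl; apply/negP => /M'B; rewrite esB'.
have mM' : forall j, j < l -> m j.+1 \in M'.
  by move=> j jl; apply: (subsetP msM'); apply/imsetP; exists (Ordinal jl).
have M'dis : forall f g, f \in M' -> g \in M' -> f != g -> vdisjoint f g.
  by move=> f g fM gM; apply: M'm.
exists ((M' :\: ms) :|: eS).
have MtP : forall f, f \in (M' :\: ms) :|: eS ->
    (f \in M' /\ f \notin ms) \/ exists2 j, j < l & f = e j.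
  move=> f; rewrite in_setU in_setD => /orP[/andP[fm fM]|/esP fe]; first by left.
  by right.
have vsym : forall f g : X * Y, vdisjoint f g -> vdisjoint g f.
  move=> f g; rewrite /vdisjoint; move=> /andP[a b]; apply/andP; split; by rewrite eq_sym.
have mixed : forall f j, f \in M' -> f \notin ms -> j < l -> vdisjoint f (e j).
  move=> f j fM fms jl; apply/andP; split.
    by apply/eqP => fe; move: (M'B f fM); rewrite fe esB'.
  have [-> _] := H3 j.+1 jl.
  have fmj : f != m j.+1.
    by apply/eqP => fe; move: fms; rewrite fe; move/negP; apply; apply/imsetP; exists (Ordinal jl).
  by case/andP: (M'dis _ _ fM (mM' j jl) fmj).
split.
- split.
  + apply/subsetP => f /MtP[[fM _]|[j jl ->]]; first exact: (subsetP M'E).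
    by have [] := He j jl.
  + move=> f g /MtP[[fM fms]|[i il ->]] /MtP[[gM gms]|[j jl ->]] fg.
    * exact: M'dis.
    * exact: mixed.
    * by apply: vsym; apply: mixed.
    * by apply: H4a => //; apply/eqP => ij; move: fg; rewrite ij eqxx.
  + have mixc : forall f j, f \in M' -> f \notin ms -> j < l -> col f != col (e j).
      move=> f j fM fms jl; case: j jl => [|j] jl.
        by rewrite He0 M'c.
      rewrite -F2 // -F1 ?(ltnW jl) //; apply/eqP => cf.
      have := M'inj f (m j.+1) fM (mM' j (ltnW jl)) cf => fe.
      by move: fms; rewrite fe; move/negP; apply; apply/imsetP; exists (Ordinal (ltnW jl)).
    move=> f g /MtP[[fM fms]|[i il ->]] /MtP[[gM gms]|[j jl ->]] cfg.
    * exact: M'inj.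
    * by move: (mixc f j fM fms jl); rewrite cfg eqxx.
    * by move: (mixc g i gM gms il); rewrite cfg eqxx.
    * apply/eqP/negPn/negP => ij.
      have : i != j by apply/eqP => ij'; move: ij; rewrite ij' eqxx.
      move/(H4c i j (ltnW il) (ltnW jl)); rewrite !F2 // cfg eqxx //.
- rewrite cardsU.
  have -> : (M' :\: ms) :&: eS = set0.
    apply/setP => f; rewrite in_set0 in_setI in_setD.
    apply/negP => /andP[/andP[_ fM] /esP[j jl fe]].
    by move: (eM' j jl); rewrite -fe fM.
  by rewrite cards0 subn0 cardsDS // cms ces M'n subnK // -M'n -cms subset_leq_card.
- move=> f /MtP[[fM fms]|[i il ->]].
    apply/eqP => cf.
    have lp : l.-1 < l by rewrite prednK ?leqnn.
    have := M'inj f (m l) fM _ cf.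
    rewrite -{1 2}(prednK Hl) => /(_ (mM' _ lp)) fe.
    by move: fms; rewrite fe; move/negP; apply; apply/imsetP; exists (Ordinal lp).
  rewrite -F2 // (F1 l) ?Hl ?leqnn //.
  by apply: H4c => //; [exact: ltnW | rewrite neq_ltn il].
- apply/subsetP => f fA; rewrite in_setU in_setD (subsetP AM'' f fA) andbT.
  apply/orP; left; apply/negP => /msP[j jl fe].
  apply: (dis _ _ _ _ D2 (smX j jl)); rewrite -fe; apply/imsetP; by exists f.
- move=> f /MtP[[fM fms]|[i il ->]]; rewrite in_setU negb_or; apply/andP; split.
  + apply/negP => /mXP[j jl fe].
    have fmj : f != m j.+1.
      by apply/eqP => fe'; move: fms; rewrite fe'; move/negP; apply; apply/imsetP; exists (Ordinal jl).
    by case/andP: (M'dis _ _ fM (mM' j jl) fmj); rewrite fe eqxx.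
  + apply/negP => fB; move: (M'B f fM); rewrite in_setU fB.
    done.
  + by apply/negP => /mXP[j jl fe]; move: (emX i j il jl); rewrite fe eqxx.
  + by apply/negP => fB; apply: (dis _ _ _ _ D3 (swX i il) fB).
Qed.
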